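(* For every integer $k\ge 1$, the ordinary generating function $F^{-}_k(x)=\sum_{n\ge1} f^{(n)}_k x^n$, where $f^{(n)}_k$ is the number of trees $t\in\mathcal{T}_n$ with $\gamma(t)\le k$, satisfies $$F^{-}_k = x + (F^{-}_k)^2 - 2^{k-1}x^{k+1},$$ and consequently $$F^{-}_k(x)=\frac{1-\sqrt{1-4x+2^{k+1}x^{k+1}}}{2}.$$
   Context: $\mathcal{T}$ denotes the class of ordered (plane) rooted binary trees, in which every internal node has exactly two ordered children (left and right); the size of a tree is its number of leaves, and $\mathcal{T}_n$ is the set of such trees of size $n$. A tree is a caterpillar if every node is either a leaf or has at least one leaf among its direct children (the single-leaf tree is the caterpillar of size 1). For a tree $t$ and a node $v$, the subtree of $t$ at $v$ consists of $v$ together with all its descendants. $\gamma(t)$ is the largest size of a caterpillar that occurs as the subtree of $t$ at some node of $t$. *)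

(* Defs.v *)
From Stdlib Require Import Reals Lra Lia ZArith Arith List.
Import ListNotations.

(* Ordered rooted binary trees; size = number of leaves. *)
Inductive tree : Type :=
| Leaf : tree
| Node : tree -> tree -> tree.

Fixpoint leaves (t : tree) : nat :=
  match t with Leaf => 1 | Node l r => leaves l + leaves r end.

Fixpoint subtrees (t : tree) : list tree :=
  t :: match t with Leaf => [] | Node l r => subtrees l ++ subtrees r end.

Definition is_leaf (t : tree) : bool :=
  match t with Leaf => true | _ => false end.

Definition node_ok (v : tree) : bool :=
  match v with Leaf => true | Node l r => is_leaf l || is_leaf r end.

Definition caterpillar (t : tree) : bool := forallb node_ok (subtrees t).

Definition gamma (t : tree) : nat :=
  fold_right Nat.max 0
    (map leaves (filter caterpillar (subtrees t))).

Definition counts (P : tree -> Prop) (c : nat) : Prop :=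
  exists l : list tree, NoDup l /\ (forall t, In t l <-> P t) /\ length l = c.

(* Main.v *)
Require Import Defs.
From Coquelicot Require Import Coquelicot.
From Stdlib Require Import Reals ZArith Arith List Lia Lra Psatz FinFun Bool.
Import ListNotations.
Open Scope bool_scope.
Open Scope nat_scope.

Lemma leaves_pos t : 1 <= leaves t.
Proof. induction t; simpl; lia. Qed.

Lemma leaves1 t : leaves t = 1 -> t = Leaf.
Proof. destruct t; simpl; auto. pose proof (leaves_pos t1); pose proof (leaves_pos t2); lia. Qed.

Lemma counts_unique P a b : counts P a -> counts P b -> a = b.
Proof.
  intros [l1 [N1 [M1 L1]]] [l2 [N2 [M2 L2]]]. subst.
  apply Nat.le_antisymm; apply NoDup_incl_length; auto; intros x Hx.
  - apply M2, M1, Hx.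
  - apply M1, M2, Hx.
Qed.

Lemma counts_sub P Q a b : counts P a -> counts Q b -> (forall t, Q t -> P t) -> b <= a.
Proof.
  intros [l1 [N1 [M1 L1]]] [l2 [N2 [M2 L2]]] H. subst.
  apply NoDup_incl_length; auto; intros x Hx. apply M1, H, M2, Hx.
Qed.

Lemma counts_ext P Q a : (forall t, P t <-> Q t) -> counts P a -> counts Q a.
Proof.
  intros H [l [N [M L]]]. exists l; split; [auto|split; auto].
  intro t; rewrite M; apply H.
Qed.

Lemma counts_empty (P : tree -> Prop) : (forall t, ~ P t) -> counts P 0.
Proof.
  intros H. exists []. split; [constructor|split; auto].
  intro t; split; [intros []|intro Ht; exfalso; exact (H t Ht)].
Qed.

Lemma counts_single t0 : counts (fun t => t = t0) 1.
Proof.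
  exists [t0]. split; [repeat constructor; intros []|split; auto].
  intro t; simpl; split; [intros [H|[]]; auto|intros ->; auto].
Qed.

Lemma counts_union P Q a b : counts P a -> counts Q b ->
  (forall t, P t -> Q t -> False) -> counts (fun t => P t \/ Q t) (a + b).
Proof.
  intros [l1 [N1 [M1 L1]]] [l2 [N2 [M2 L2]]] H. subst.
  exists (l1 ++ l2). split; [|split].
  - apply NoDup_app; auto. intros x H1 H2. apply (H x); [apply M1|apply M2]; auto.
  - intro t. rewrite in_app_iff, M1, M2. tauto.
  - apply length_app.
Qed.

Lemma counts_bigunion (P : nat -> tree -> Prop) (c : nat -> nat) (s : list nat) :
  NoDup s -> (forall i, counts (P i) (c i)) -> (forall i j t, P i t -> P j t -> i = j) ->
  counts (fun t => exists i, In i s /\ P i t) (fold_right Nat.add 0 (map c s)).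
Proof.
  intros Hs Hc Hd. induction s as [|i s IH].
  - apply counts_empty. intros t [i [[] _]].
  - apply NoDup_cons_iff in Hs as [Hi Hs]. simpl.
    eapply counts_ext; [|apply counts_union; [apply Hc|apply (IH Hs)|]].
    + intro t; split.
      * intros [Pj|[j [Hj Pj]]]; [exists i; simpl; auto|exists j; simpl; auto].
      * intros [j [[<-|Hj] Pj]]; [left; auto|right; eauto].
    + intros t H1 [j [Hj Pj]]. pose proof (Hd _ _ _ H1 Pj); subst. auto.
Qed.

Lemma counts_map (g : tree -> tree) P a : (forall u v, g u = g v -> u = v) ->
  counts P a -> counts (fun t => exists u, t = g u /\ P u) a.
Proof.
  intros Hg [l [N [M L]]]. subst. exists (map g l). split; [|split].
  - apply Injective_map_NoDup; auto.
  - intro t. rewrite in_map_iff. split.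
    + intros [u [<- Hu]]. exists u; split; auto; apply M; auto.
    + intros [u [-> Hu]]. exists u; split; auto; apply M; auto.
  - apply length_map.
Qed.

Lemma prod_list (la lb : list tree) : NoDup la -> NoDup lb ->
  NoDup (flat_map (fun l => map (Node l) lb) la) /\
  length (flat_map (fun l => map (Node l) lb) la) = length la * length lb.
Proof.
  intros Ha Hb. induction la as [|a la IH]; simpl.
  - split; auto; constructor.
  - apply NoDup_cons_iff in Ha as [Hn Ha]. destruct (IH Ha) as [IH1 IH2].
    split.
    + apply NoDup_app; auto.
      * apply Injective_map_NoDup; auto. intros x y E; inversion E; auto.
      * intros x H1 H2. apply in_map_iff in H1 as [r [<- _]].
        apply in_flat_map in H2 as [l [Hl H2]]. apply in_map_iff in H2 as [r' [E _]].
        inversion E; subst; auto.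
    + rewrite length_app, length_map, IH2. lia.
Qed.

Lemma counts_prod A B a b : counts A a -> counts B b ->
  counts (fun t => exists l r, t = Node l r /\ A l /\ B r) (a * b).
Proof.
  intros [la [Na [Ma La]]] [lb [Nb [Mb Lb]]]. subst.
  destruct (prod_list la lb Na Nb) as [H1 H2].
  exists (flat_map (fun l => map (Node l) lb) la). split; [auto|split; auto].
  intro t. rewrite in_flat_map. split.
  - intros [l [Hl Ht]]. apply in_map_iff in Ht as [r [<- Hr]].
    exists l, r; split; auto; split; [apply Ma|apply Mb]; auto.
  - intros [l [r [-> [Hl Hr]]]]. exists l; split; [apply Ma; auto|].
    apply in_map; apply Mb; auto.
Qed.

Lemma filter_len (q : tree -> bool) l :
  length (filter (fun t => negb (q t)) l) + length (filter q l) = length l.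
Proof. induction l; simpl; auto. destruct (q a); simpl; lia. Qed.

Lemma counts_diff P (q : tree -> bool) a b : counts P a ->
  counts (fun t => q t = true) b -> (forall t, q t = true -> P t) ->
  counts (fun t => P t /\ q t = false) (a - b).
Proof.
  intros [l [N [M L]]] Hb H. subst.
  assert (Eb : b = length (filter q l)).
  { apply (counts_unique (fun t => q t = true)); auto.
    exists (filter q l). split; [apply NoDup_filter; auto|split; auto].
    intro t; rewrite filter_In, M. split; [tauto|intros; split; auto]. }
  exists (filter (fun t => negb (q t)) l). split; [apply NoDup_filter; auto|split].
  - intro t; rewrite filter_In, M. destruct (q t); simpl; intuition congruence.
  - pose proof (filter_len q l). lia.
Qed.

Lemma subtrees_self t : In t (subtrees t).
Proof. destruct t; simpl; auto. Qed.

Lemma subtrees_leaves t s : In s (subtrees t) -> leaves s <= leaves t.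
Proof.
  induction t; simpl.
  - intros [<-|[]]; auto.
  - intros [<-|H]; [simpl; lia|]. apply in_app_or in H as [H|H];
    [apply IHt1 in H|apply IHt2 in H]; lia.
Qed.

Lemma fold_max_app l1 l2 : fold_right Nat.max 0 (l1 ++ l2) =
  Nat.max (fold_right Nat.max 0 l1) (fold_right Nat.max 0 l2).
Proof. induction l1; simpl; lia. Qed.

Lemma fold_max_le l m : (forall x, In x l -> x <= m) -> fold_right Nat.max 0 l <= m.
Proof.
  induction l; simpl; intros H; [lia|].
  specialize (H a (or_introl eq_refl)) as Ha.
  assert (fold_right Nat.max 0 l <= m) by (apply IHl; auto). lia.
Qed.

Lemma fold_max_ge l x : In x l -> x <= fold_right Nat.max 0 l.
Proof. induction l; simpl; [intros []|intros [<-|H]; [lia|apply IHl in H; lia]]. Qed.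

Lemma gamma_le t : gamma t <= leaves t.
Proof.
  unfold gamma. apply fold_max_le. intros x Hx.
  apply in_map_iff in Hx as [s [<- Hs]]. apply filter_In in Hs as [Hs _].
  apply subtrees_leaves; auto.
Qed.

Lemma gamma_cat t : caterpillar t = true -> gamma t = leaves t.
Proof.
  intros C. apply Nat.le_antisymm; [apply gamma_le|].
  unfold gamma. apply fold_max_ge. apply in_map. apply filter_In; split; auto.
  apply subtrees_self.
Qed.

Lemma cat_Node l r : caterpillar (Node l r) =
  (is_leaf l || is_leaf r) && caterpillar l && caterpillar r.
Proof. unfold caterpillar. cbn [subtrees forallb]. rewrite forallb_app.
  cbn [node_ok]. destruct (is_leaf l || is_leaf r); reflexivity. Qed.

Lemma gamma_Node l r : gamma (Node l r) = Nat.max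
  (if caterpillar (Node l r) then leaves l + leaves r else 0) (Nat.max (gamma l) (gamma r)).
Proof.
  unfold gamma at 1. cbn [subtrees filter].
  destruct (caterpillar (Node l r)); cbn [map fold_right];
  rewrite filter_app, map_app, fold_max_app; reflexivity.
Qed.
Lemma good_Node l r k : gamma (Node l r) <= k <->
  gamma l <= k /\ gamma r <= k /\ ~ (caterpillar (Node l r) = true /\ leaves l + leaves r = k + 1).
Proof.
  rewrite gamma_Node. split.
  - intros H. split; [lia|split;[lia|]]. intros [C E]. rewrite C in H. lia.
  - intros [Hl [Hr Hn]]. destruct (caterpillar (Node l r)) eqn:C; [|lia].
    assert (leaves l + leaves r <= k + 1).
    { rewrite cat_Node in C. apply andb_prop in C as [C Cr]. apply andb_prop in C as [C Cl].
      rewrite (gamma_cat _ Cl) in Hl. rewrite (gamma_cat _ Cr) in Hr.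
      apply orb_prop in C as [C|C]; destruct l; try discriminate; destruct r; try discriminate;
      simpl in *; lia. }
    assert (leaves l + leaves r <> k + 1) by tauto. lia.
Qed.

Lemma cat_count j : counts (fun t => caterpillar t = true /\ leaves t = j + 2) (2 ^ j).
Proof.
  induction j as [|j IH].
  - eapply counts_ext; [|apply (counts_single (Node Leaf Leaf))].
    intro t; split; [intros ->; split; reflexivity|].
    intros [C E]. destruct t as [|l r]; simpl in E; [lia|].
    pose proof (leaves_pos l); pose proof (leaves_pos r).
    rewrite (leaves1 l), (leaves1 r); auto; lia.
  - replace (2 ^ S j) with (2 ^ j + 2 ^ j) by (simpl; lia).
    eapply counts_ext; [|apply counts_union;
      [apply (counts_map (Node Leaf)); [intros u v E; inversion E; auto|apply IH]
      |apply (counts_map (fun u => Node u Leaf)); [intros u v E; inversion E; auto|apply IH]|]].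
    + intro t; symmetry; split.
      * intros [C E]. destruct t as [|l r]; simpl in E; [lia|].
        rewrite cat_Node in C. apply andb_prop in C as [C Cr]. apply andb_prop in C as [C Cl].
        destruct l as [|l1 l2].
        -- left. exists r. split; [reflexivity|split; [exact Cr|simpl in E; lia]].
        -- destruct r; [|discriminate]. right. exists (Node l1 l2). split; [reflexivity|split; [exact Cl|simpl in *; lia]].
      * intros [[u [-> [C E]]]|[u [-> [C E]]]]; split; try (simpl; lia);
        rewrite cat_Node, C; simpl; auto; rewrite orb_true_r; reflexivity.
    + intros t [u [-> [C E]]] [v [E' [C' E2]]]. inversion E'; subst. simpl in E2. lia.
Qed.

Section Main.
Variable k : nat.
Hypothesis hk : 1 <= k.
Variable f : nat -> nat.
Hypothesis hf : forall n : nat, counts (fun t => leaves t = n /\ gamma t <= k) (f n).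

Lemma f0 : f 0 = 0.
Proof.
  apply (counts_unique _ _ _ (hf 0)). apply counts_empty.
  intros t [E _]. pose proof (leaves_pos t); lia.
Qed.

Lemma f1 : f 1 = 1.
Proof.
  apply (counts_unique _ _ _ (hf 1)). eapply counts_ext; [|apply (counts_single Leaf)].
  intro t; split; [intros ->; simpl; split; [auto|]; unfold gamma; simpl; lia|].
  intros [E _]; apply leaves1; auto.
Qed.

Definition csum n := fold_right Nat.add 0 (map (fun i => f i * f (n - i)) (seq 1 (n - 1))).
Definition bad n := if Nat.eqb n (k + 1) then 2 ^ (k - 1) else 0.

Lemma frec n : 2 <= n -> f n + bad n = csum n.
Proof.
  intros Hn.
  set (Q := fun i t => exists l r, t = Node l r /\ (leaves l = i /\ gamma l <= k) /\
                                         (leaves r = n - i /\ gamma r <= k)).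
  assert (HP : counts (fun t => exists i, In i (seq 1 (n - 1)) /\ Q i t) (csum n)).
  { unfold csum. apply counts_bigunion; [apply seq_NoDup| |].
    - intro i. apply counts_prod; apply hf.
    - intros i j t [l [r [-> [[E1 _] _]]]] [l' [r' [E [[E2 _] _]]]].
      inversion E; subst; auto. }
  set (q := fun t => Nat.eqb (leaves t) n && caterpillar t && Nat.eqb (leaves t) (k + 1)).
  assert (Hq : forall t, q t = true <-> leaves t = n /\ caterpillar t = true /\ leaves t = k + 1).
  { intro t; unfold q. rewrite !andb_true_iff, !Nat.eqb_eq. tauto. }
  assert (HB : counts (fun t => q t = true) (bad n)).
  { unfold bad. destruct (Nat.eqb_spec n (k + 1)) as [->|Hne].
    - eapply counts_ext; [|apply (cat_count (k - 1))].
      intro t; rewrite Hq. replace (k - 1 + 2) with (k + 1) by lia. tauto.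
    - apply counts_empty. intros t Ht. apply Hq in Ht. lia. }
  assert (Hsub : forall t, q t = true -> exists i, In i (seq 1 (n - 1)) /\ Q i t).
  { intros t Ht. apply Hq in Ht as [E [C E2]].
    destruct t as [|l r]; simpl in E; [lia|].
    rewrite cat_Node in C. apply andb_prop in C as [C Cr]. apply andb_prop in C as [C Cl].
    pose proof (leaves_pos l); pose proof (leaves_pos r).
    exists (leaves l). split; [apply in_seq; lia|].
    exists l, r. rewrite (gamma_cat _ Cl), (gamma_cat _ Cr). simpl in E2. repeat split; auto; lia. }
  pose proof (counts_diff _ _ _ _ HP HB Hsub) as HD.
  assert (Ef : f n = csum n - bad n).
  { apply (counts_unique _ _ _ (hf n)). eapply counts_ext; [|apply HD].
    intro t; split.
    - intros [[i [Hi [l [r [-> [[E1 G1] [E2 G2]]]]]]] Hqf].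
      apply in_seq in Hi. simpl. split; [lia|]. apply good_Node. repeat split; auto.
      intros [C E]. assert (q (Node l r) = true) by (apply Hq; simpl; repeat split; auto; lia).
      congruence.
    - intros [E G]. destruct t as [|l r]; simpl in E; [lia|].
      apply good_Node in G as [G1 [G2 Gn]].
      pose proof (leaves_pos l); pose proof (leaves_pos r).
      split.
      + exists (leaves l). split; [apply in_seq; lia|]. exists l, r. repeat split; auto; lia.
      + destruct (q (Node l r)) eqn:Eq; auto. apply Hq in Eq as [_ [C E3]].
        exfalso; apply Gn; split; auto. }
  pose proof (counts_sub _ _ _ _ HP HB Hsub). lia.
Qed.

End Main.

Lemma Zfold (h : nat -> nat) s : Z.of_nat (fold_right Nat.add 0 (map h s)) =
  fold_right Z.add 0%Z (map (fun i => Z.of_nat (h i)) s).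
Proof. induction s; simpl; auto. rewrite Nat2Z.inj_add, IHs. reflexivity. Qed.

Lemma part1 k (hk : 1 <= k) f
  (hf : forall n : nat, counts (fun t => leaves t = n /\ gamma t <= k) (f n)) :
  (forall n : nat, (1 <= n)%nat ->
     Z.of_nat (f n) =
       ((if Nat.eqb n 1 then 1 else 0)
        + fold_right Z.add 0%Z
            (map (fun i => Z.of_nat (f i * f (n - i)%nat)%nat) (seq 1 (n - 1)%nat))
        - (if Nat.eqb n (k + 1)%nat then 2 ^ Z.of_nat (k - 1)%nat else 0))%Z).
Proof.
  intros n Hn. destruct (Nat.eqb_spec n 1) as [->|Hn1].
  - rewrite (f1 k hk f hf). replace (Nat.eqb 1 (k + 1)) with false by (symmetry; apply Nat.eqb_neq; lia).
    simpl. reflexivity.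
  - pose proof (frec k hk f hf n ltac:(lia)) as H. unfold csum, bad in H.
    rewrite <- Zfold. apply (f_equal Z.of_nat) in H. rewrite Nat2Z.inj_add in H.
    rewrite <- H. destruct (Nat.eqb n (k + 1)); [rewrite Nat2Z.inj_pow|]; simpl; lia.
Qed.

Open Scope R_scope.

Lemma series_lim a l : is_series a l <-> is_lim_seq (sum_f_R0 a) l.
Proof. rewrite is_series_Reals, is_lim_seq_Reals. reflexivity. Qed.

Lemma ind_sum (m : nat) (v : R) N :
  sum_f_R0 (fun n => if Nat.eqb n m then v else 0) N = if Nat.leb m N then v else 0.
Proof.
  induction N.
  - destruct m; reflexivity.
  - cbn [sum_f_R0]. rewrite IHN.
    destruct (Nat.eqb_spec (S N) m), (Nat.leb_spec m N), (Nat.leb_spec m (S N)); try lia; lra.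
Qed.

Lemma psum_bound (b : nat -> R) (y r : R) :
  (forall n, 0 <= b n) -> b 0%nat = 0 ->
  (forall n, b n <= (if Nat.eqb n 1 then y else 0) + sum_f_R0 (fun i => b i * b (n - i)%nat) n) ->
  0 <= y -> 0 <= r -> y + r * r <= r -> forall N, sum_f_R0 b N <= r.
Proof.
  intros Hb H0 Hrec Hy Hr Hyr N. induction N.
  - simpl. lra.
  - assert (step : sum_f_R0 b (S N) <= y + sum_f_R0 b N * sum_f_R0 b N).
    { set (b' := fun i => if Nat.leb i N then b i else 0).
      assert (E1 : sum_f_R0 b' (S N) = sum_f_R0 b N).
      { cbn [sum_f_R0]. unfold b' at 2.
        replace (Nat.leb (S N) N) with false by (symmetry; apply Nat.leb_gt; lia).
        rewrite Rplus_0_r. apply sum_eq. intros i Hi. unfold b'.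
        replace (Nat.leb i N) with true by (symmetry; apply Nat.leb_le; lia). reflexivity. }
      assert (E2 : sum_f_R0 (fun n => sum_f_R0 (fun i => b i * b (n - i)%nat) n) (S N) =
                   sum_f_R0 (fun n => sum_f_R0 (fun i => b' i * b' (n - i)%nat) n) (S N)).
      { apply sum_eq; intros n Hn; apply sum_eq; intros i Hi. unfold b'.
        destruct (Nat.leb_spec i N), (Nat.leb_spec (n - i) N); try reflexivity.
        all: try lia.
        all: first [replace (n - i)%nat with 0%nat by lia | replace i with 0%nat by lia];
          rewrite H0; ring. }
      pose proof (cauchy_finite b' b' (S N) (Nat.lt_0_succ N)) as E3.
      match type of E3 with _ = _ + ?X => assert (R0 : 0 <= X) end.
      { apply cond_pos_sum; intro; apply cond_pos_sum; intro; apply Rmult_le_pos; unfold b';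
        destruct Nat.leb; auto; lra. }
      assert (E4 : sum_f_R0 b (S N) <= sum_f_R0 (fun n => (if Nat.eqb n 1 then y else 0) +
                     sum_f_R0 (fun i => b i * b (n - i)%nat) n) (S N)) by (apply sum_Rle; auto).
      rewrite sum_plus, ind_sum in E4. simpl (Nat.leb 1 (S N)) in E4.
      rewrite E1 in E3. lra. }
    assert (0 <= sum_f_R0 b N) by (apply cond_pos_sum; auto).
    assert (sum_f_R0 b N * sum_f_R0 b N <= r * r) by nra. lra.
Qed.

Lemma conv_scale (a : nat -> R) z n :
  sum_f_R0 (fun i => (a i * z ^ i) * (a (n - i)%nat * z ^ (n - i))) n =
  sum_f_R0 (fun i => a i * a (n - i)%nat) n * z ^ n.
Proof.
  rewrite Rmult_comm, scal_sum. apply sum_eq. intros i Hi.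
  replace (z ^ n) with (z ^ i * z ^ (n - i)) by (rewrite <- pow_add; f_equal; lia). ring.
Qed.

Lemma sum_seq (g : nat -> R) n : (1 <= n)%nat ->
  sum_f_R0 g n = g 0%nat + g n + fold_right Rplus 0 (map g (seq 1 (n - 1))).
Proof.
  intros Hn. induction n as [|n IH]; [lia|].
  destruct (Nat.eq_dec n 0) as [->|Hn0].
  - simpl. ring.
  - cbn [sum_f_R0]. rewrite IH by lia.
    replace (S n - 1)%nat with (S (n - 1)) by lia. rewrite seq_S, map_app, fold_right_app.
    simpl. replace (S (n - 1)) with n by lia.
    assert (forall l c, fold_right Rplus c l = c + fold_right Rplus 0 l) as Hf.
    { induction l; intros; simpl; [ring|rewrite IHl; ring]. }
    rewrite (Hf _ (g n + 0)). ring.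
Qed.

Lemma INR_fold (h : nat -> nat) s : INR (fold_right Nat.add 0%nat (map h s)) =
  fold_right Rplus 0 (map (fun i => INR (h i)) s).
Proof. induction s; simpl; auto. rewrite plus_INR, IHs. reflexivity. Qed.

Lemma arec k (hk : (1 <= k)%nat) f
  (hf : forall n : nat, counts (fun t => leaves t = n /\ (gamma t <= k)%nat) (f n)) n :
  INR (f n) = (if Nat.eqb n 1 then 1 else 0) +
     sum_f_R0 (fun i => INR (f i) * INR (f (n - i)%nat)) n -
     (if Nat.eqb n (k + 1) then 2 ^ (k - 1) else 0).
Proof.
  pose proof (f0 k hk f hf) as F0.
  destruct n as [|[|n]].
  - replace (Nat.eqb 0 (k+1)) with false by (symmetry; apply Nat.eqb_neq; lia).
    cbn [sum_f_R0 Nat.sub]. rewrite F0. simpl; ring.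
  - replace (Nat.eqb 1 (k+1)) with false by (symmetry; apply Nat.eqb_neq; lia).
    cbn [sum_f_R0 Nat.sub]. rewrite (f1 k hk f hf), F0. simpl; ring.
  - pose proof (frec k hk f hf (S (S n)) ltac:(lia)) as H. unfold csum, bad in H.
    apply (f_equal INR) in H. rewrite plus_INR, INR_fold in H.
    rewrite sum_seq by lia. rewrite Nat.sub_0_r, Nat.sub_diag, F0.
    replace (Nat.eqb (S (S n)) 1) with false by reflexivity.
    rewrite (map_ext (fun i => INR (f i) * INR (f (S (S n) - i)%nat))
                     (fun i => INR (f i * f (S (S n) - i)%nat))) by (intros; rewrite mult_INR; auto).
    rewrite <- H. destruct (Nat.eqb (S (S n)) (k + 1)).
    + rewrite pow_INR. simpl (INR 2). replace (1+1) with 2 by ring. simpl. ring.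
    + simpl. ring.
Qed.

Theorem part2 (k : nat) (hk : (1 <= k)%nat) (f : nat -> nat)
  (hf : forall n : nat, counts (fun t => leaves t = n /\ (gamma t <= k)%nat) (f n)) :
  (forall x : R, (Rabs x < / 4)%R ->
     infinite_sum (fun n => (INR (f (S n)) * x ^ (S n))%R)
       ((1 - sqrt (1 - 4 * x + 2 ^ (k + 1) * x ^ (k + 1))) / 2)%R).
Proof.
  intros x Hx.
  set (a := fun n => INR (f n)).
  set (c := 2 ^ (k - 1)).
  assert (Hc : 0 <= c) by (apply pow_le; lra).
  assert (A0 : a 0%nat = 0) by (unfold a; rewrite (f0 k hk f hf); reflexivity).
  assert (Apos : forall n, 0 <= a n) by (intro; apply pos_INR).
  assert (Arec : forall n, a n = (if Nat.eqb n 1 then 1 else 0) +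
     sum_f_R0 (fun i => a i * a (n - i)%nat) n - (if Nat.eqb n (k + 1) then c else 0))
    by (intro n; apply (arec k hk f hf n)).
  set (y := Rabs x).
  assert (Hy : 0 <= y) by apply Rabs_pos.
  set (s := sqrt (1 - 4 * y)).
  assert (Hs2 : s * s = 1 - 4 * y) by (apply sqrt_sqrt; unfold y in *; lra).
  assert (Hs0 : 0 < s) by (apply sqrt_lt_R0; unfold y in *; lra).
  assert (Hs1 : s <= 1) by nra.
  set (r := (1 - s) / 2).
  set (b := fun n => a n * y ^ n).
  assert (PB : forall N, sum_f_R0 b N <= r).
  { apply psum_bound with y.
    - intro; unfold b; apply Rmult_le_pos; auto; apply pow_le; auto.
    - unfold b; rewrite A0; ring.
    - intro n. unfold b. rewrite conv_scale.
      assert (a n <= (if Nat.eqb n 1 then 1 else 0) + sum_f_R0 (fun i => a i * a (n - i)%nat) n).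
      { rewrite (Arec n) at 1. destruct (Nat.eqb n (k+1)); lra. }
      assert (Hyn : 0 <= y ^ n) by (apply pow_le; auto).
      destruct (Nat.eqb n 1) eqn:E.
      + apply Nat.eqb_eq in E. rewrite E in *. simpl in *. nra.
      + nra.
    - auto.
    - unfold r; lra.
    - unfold r. nra. }
  assert (Bser : ex_series b).
  { destruct (ex_finite_lim_seq_incr (sum_f_R0 b) r) as [l Hl].
    - intro n. cbn [sum_f_R0]. assert (0 <= b (S n)) by (unfold b; apply Rmult_le_pos; auto; apply pow_le; auto). lra.
    - auto.
    - exists l. apply series_lim; auto. }
  set (u := fun n => a n * x ^ n).
  assert (Ub : forall n, Rabs (u n) = b n).
  { intro n. unfold u, b, y. rewrite Rabs_mult, RPow_abs, Rabs_pos_eq; auto. }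
  assert (Uabs : ex_series (fun n => Rabs (u n))).
  { eapply ex_series_ext; [|apply Bser]. intro n; rewrite Ub; auto. }
  destruct (ex_series_Rabs u Uabs) as [L HL]. change R in L.
  pose proof (is_series_mult u u L L HL HL Uabs Uabs) as HM.
  assert (HW1 : is_series (fun n => u n - sum_f_R0 (fun i => u i * u (n - i)%nat) n) (L - L * L)).
  { apply (is_series_minus _ _ _ _ HL HM). }
  set (d := c * x ^ (k + 1)).
  assert (HW2 : is_series (fun n => u n - sum_f_R0 (fun i => u i * u (n - i)%nat) n) (x - d)).
  { apply is_series_Reals. intros eps Heps. exists (k + 1)%nat. intros n Hn.
    rewrite (sum_eq _ (fun n => (if Nat.eqb n 1 then x else 0) - (if Nat.eqb n (k + 1) then d else 0))).
    - rewrite minus_sum, !ind_sum.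
      replace (Nat.leb 1 n) with true by (symmetry; apply Nat.leb_le; lia).
      replace (Nat.leb (k + 1) n) with true by (symmetry; apply Nat.leb_le; lia).
      unfold R_dist. rewrite Rminus_diag, Rabs_R0. auto.
    - intros i _. unfold u at 1. rewrite (Arec i). unfold u. rewrite conv_scale.
      unfold d. destruct (Nat.eqb_spec i 1), (Nat.eqb_spec i (k+1)); try lia; subst;
      simpl; ring. }
  assert (EQ : L - L * L = x - d).
  { apply is_series_unique in HW1. apply is_series_unique in HW2. congruence. }
  assert (Lr : L <= r).
  { apply series_lim in HL.
    assert (Rbar_le L r).
    { refine (is_lim_seq_le _ _ L r _ HL (is_lim_seq_const r)).
      intro n. apply Rle_trans with (Rabs (sum_f_R0 u n)); [apply Rle_abs|].
      apply Rle_trans with (sum_f_R0 (fun i => Rabs (u i)) n); [apply sum_f_R0_triangle|].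
      rewrite (sum_eq _ b) by (intros; apply Ub). auto. }
    simpl in H. auto. }
  assert (HD : 1 - 4 * x + 2 ^ (k + 1) * x ^ (k + 1) = (1 - 2 * L) * (1 - 2 * L)).
  { replace (2 ^ (k + 1)) with (4 * c).
    - unfold d in EQ. nra.
    - unfold c. replace (k + 1)%nat with (k - 1 + 2)%nat by lia. rewrite pow_add. simpl. ring. }
  rewrite HD, sqrt_square by (unfold r in Lr; lra).
  replace ((1 - (1 - 2 * L)) / 2) with L by field.
  apply is_series_Reals.
  apply (is_series_incr_1 u). change (plus L (u 0%nat)) with (L + u 0%nat).
  unfold u at 2. rewrite A0, Rmult_0_l, Rplus_0_r. exact HL.
Qed.

Theorem mainTheorem1 (k : nat) (hk : (1 <= k)%nat) (f : nat -> nat)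
  (hf : forall n : nat, counts (fun t => leaves t = n /\ (gamma t <= k)%nat) (f n)) :
  (* F = x + F^2 - 2^(k-1) x^(k+1), coefficientwise for n >= 1 *)
  (forall n : nat, (1 <= n)%nat ->
     Z.of_nat (f n) =
       ((if Nat.eqb n 1 then 1 else 0)
        + fold_right Z.add 0%Z
            (map (fun i => Z.of_nat (f i * f (n - i)%nat)%nat) (seq 1 (n - 1)%nat))
        - (if Nat.eqb n (k + 1)%nat then 2 ^ Z.of_nat (k - 1)%nat else 0))%Z)
  /\
  (* closed form, as an identity of convergent power series for |x| < 1/4 *)
  (forall x : R, (Rabs x < / 4)%R ->
     infinite_sum (fun n => (INR (f (S n)) * x ^ (S n))%R)
       ((1 - sqrt (1 - 4 * x + 2 ^ (k + 1) * x ^ (k + 1))) / 2)%R).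
Proof.
  split; [apply part1; auto | apply part2; auto].
Qed.
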